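(* Let $D$ be a positive squarefree integer with $N(\varepsilon)=-1$, and let $\ell=4$ if $D\equiv1\bmod4$ and $\ell=1$ otherwise. Then for $\operatorname{Re}s>0$, \[ Z_D^{\mathrm{odd}}(s)=\frac14\sum_{n\ge1}\frac{r_1(n)\,r_1(Dn-\ell)}{n^{s/2}},\qquad Z_D^{\mathrm{even}}(s)=\frac14\sum_{n\ge1}\frac{r_1(n)\,r_1(Dn+\ell)}{n^{s/2}}. \]
   Context: $r_1(n)=\#\{x\in\mathbb{Z}:x^2=n\}$ (so $r_1(n)=0$ for negative $n$). $\mathcal{O}_D$ is the ring of integers of $\mathbb{Q}(\sqrt D)\subset\mathbb{R}$, $\varepsilon>1$ its fundamental unit, $\overline{\varepsilon}$ its conjugate, $N$ the norm. $q=D$ if $D\equiv1\bmod4$, else $q=4D$. $F_D(n)=(\varepsilon^n-\overline{\varepsilon}^{\,n})/\sqrt q$. $Z_D^{\mathrm{odd}}(s)=\sum_{n\ge1}F_D(2n-1)^{-s}$ and $Z_D^{\mathrm{even}}(s)=\sum_{n\ge1}F_D(2n)^{-s}$. *)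

(* Defs.v *)
From Stdlib Require Import Reals ZArith List Lra.
From Coquelicot Require Import Coquelicot.
Open Scope R_scope.

Definition squarefree (D : Z) : Prop :=
  forall k : Z, (k * k | D)%Z -> k = 1%Z \/ k = (-1)%Z.

(* r_1(n) = #{x in Z : x^2 = n}.  Every solution satisfies |x| <= |n|,
   so we count over the finite range [-|n|, |n|]. *)
Definition r1 (n : Z) : R :=
  INR (length (filter (fun x => Z.eqb (x * x) n)
    (map (fun k => (Z.of_nat k - Z.abs n)%Z)
         (seq 0 (Z.to_nat (2 * Z.abs n + 1)))))).

(* Elements of Q(sqrt D) written as (a + b sqrt D)/2 with a b integers. *)
Definition qval (D a b : Z) : R := (IZR a + IZR b * sqrt (IZR D)) / 2.
Definition qconj (D a b : Z) : R := (IZR a - IZR b * sqrt (IZR D)) / 2.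
Definition qnorm (D a b : Z) : R := IZR (a * a - D * b * b) / 4.

Definition inOD (D a b : Z) : Prop :=
  if Z.eqb (Z.modulo D 4) 1 then Z.even (a - b) = true
  else Z.even a = true /\ Z.even b = true.

Definition isUnitOD (D a b : Z) : Prop :=
  inOD D a b /\ (qnorm D a b = 1 \/ qnorm D a b = -1).

Definition isFundUnit (D a b : Z) : Prop :=
  isUnitOD D a b /\ 1 < qval D a b /\
  forall c d : Z, isUnitOD D c d -> 1 < qval D c d -> qval D a b <= qval D c d.

Definition qD (D : Z) : R := if Z.eqb (Z.modulo D 4) 1 then IZR D else 4 * IZR D.

Definition FD (D a b : Z) (n : nat) : R :=
  (qval D a b ^ n - qconj D a b ^ n) / sqrt (qD D).

Definition cpow_neg (x : R) (s : C) : C :=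
  (exp (- Re s * ln x) * cos (- Im s * ln x),
   exp (- Re s * ln x) * sin (- Im s * ln x)).

(* n-th term (n >= 1, written k.+1) of Z^odd and Z^even *)
Definition Zodd_term (D a b : Z) (s : C) (k : nat) : C := cpow_neg (FD D a b (2 * k + 1)) s.
Definition Zeven_term (D a b : Z) (s : C) (k : nat) : C := cpow_neg (FD D a b (2 * k + 2)) s.


Definition ellD (D : Z) : Z := if Z.eqb (Z.modulo D 4) 1 then 4%Z else 1%Z.

Definition dir_odd_term (D : Z) (s : C) (k : nat) : C :=
  Cmult (RtoC (/ 4 * r1 (Z.of_nat (S k)) * r1 (D * Z.of_nat (S k) - ellD D)))
        (cpow_neg (INR (S k)) (Cmult s (RtoC (/ 2)))).
Definition dir_even_term (D : Z) (s : C) (k : nat) : C :=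
  Cmult (RtoC (/ 4 * r1 (Z.of_nat (S k)) * r1 (D * Z.of_nat (S k) + ellD D)))
        (cpow_neg (INR (S k)) (Cmult s (RtoC (/ 2)))).

(* Main.v *)
Require Import Defs.
From Stdlib Require Import Reals ZArith Lia Lra Psatz List Classical ClassicalEpsilon.
From Coquelicot Require Import Coquelicot.
Open Scope R_scope.


Lemma sqrt_sq_D (D : Z) : (0 <= D)%Z -> sqrt (IZR D) * sqrt (IZR D) = IZR D.
Proof. intro H. apply sqrt_sqrt. apply IZR_le in H. exact H. Qed.

Lemma qval_qconj D c d : (0 <= D)%Z -> qval D c d * qconj D c d = qnorm D c d.
Proof.
  intro HD. unfold qval, qconj, qnorm.
  pose proof (sqrt_sq_D D HD) as Hs. set (s := sqrt (IZR D)) in *.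
  rewrite !minus_IZR, !mult_IZR. rewrite <- Hs. field.
Qed.

Lemma even_ex t : Z.even t = true <-> exists k, t = (2 * k)%Z.
Proof. rewrite Z.even_spec. reflexivity. Qed.

Lemma od_mul D c d a b : inOD D c d -> inOD D a b ->
  exists X Y, (2 * X = c * a + D * d * b)%Z /\ (2 * Y = c * b + d * a)%Z /\ inOD D X Y.
Proof.
  unfold inOD. destruct (Z.eqb (D mod 4) 1) eqn:E.
  - apply Z.eqb_eq in E. assert (HD : D = (4 * (D / 4) + D mod 4)%Z) by (apply Z.div_mod; lia).
    rewrite E in HD. set (w := (D / 4)%Z) in *. clearbody w.
    rewrite !even_ex. intros [u Hu] [v Hv].
    exists (d*b + u*b + v*d + 2*u*v + 2*w*d*b)%Z, (d*b+u*b+v*d)%Z.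
    assert (c = d + 2*u)%Z by lia. assert (a = b + 2*v)%Z by lia. subst c a D.
    split; [ring|split;[ring|]]. apply even_ex; exists (u*v + w*d*b)%Z. ring.
  - rewrite !even_ex. intros [[c' Hc] [d' Hd]] [[a' Ha] [b' Hb]]. subst.
    exists (2*(c'*a' + D*d'*b'))%Z, (2*(c'*b'+d'*a'))%Z.
    split; [ring|split;[ring|]]. split; apply even_ex; [exists (c'*a' + D*d'*b')%Z|exists (c'*b'+d'*a')%Z]; ring.
Qed.

Lemma qval_mul D c d a b X Y : (0 <= D)%Z ->
  (2 * X = c * a + D * d * b)%Z -> (2 * Y = c * b + d * a)%Z ->
  qval D X Y = qval D c d * qval D a b /\ qconj D X Y = qconj D c d * qconj D a b.
Proof.
  intros HD H1 H2. apply (f_equal IZR) in H1. apply (f_equal IZR) in H2.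
  repeat rewrite ?mult_IZR, ?plus_IZR in H1. repeat rewrite ?mult_IZR, ?plus_IZR in H2.
  unfold qval, qconj.
  pose proof (sqrt_sq_D D HD) as Hs. set (s := sqrt (IZR D)) in *.
  assert (IZR X = (IZR c * IZR a + IZR D * IZR d * IZR b)/2) as -> by lra.
  assert (IZR Y = (IZR c * IZR b + IZR d * IZR a)/2) as -> by lra.
  rewrite <- Hs. split; field.
Qed.

Lemma unit_mul D c d a b : (0 <= D)%Z -> isUnitOD D c d -> isUnitOD D a b ->
  exists X Y, isUnitOD D X Y /\ qval D X Y = qval D c d * qval D a b /\
              qconj D X Y = qconj D c d * qconj D a b.
Proof.
  intros HD [H1 N1] [H2 N2].
  destruct (od_mul D c d a b H1 H2) as (X & Y & E1 & E2 & H3).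
  destruct (qval_mul D c d a b X Y HD E1 E2) as [V1 V2].
  exists X, Y. split; [|split; assumption]. split; [assumption|].
  rewrite <- (qval_qconj D X Y HD), V1, V2.
  rewrite <- (qval_qconj D c d HD) in N1. rewrite <- (qval_qconj D a b HD) in N2.
  replace (qval D c d * qval D a b * (qconj D c d * qconj D a b)) with
     ((qval D c d * qconj D c d) * (qval D a b * qconj D a b)) by ring.
  destruct N1 as [-> | ->]; destruct N2 as [-> | ->]; lra.
Qed.

Lemma unit_one D : isUnitOD D 2 0 /\ qval D 2 0 = 1 /\ qconj D 2 0 = 1.
Proof.
  unfold isUnitOD, inOD, qval, qconj, qnorm.
  split; [split|split].
  - destruct (Z.eqb (D mod 4) 1); [reflexivity|split; reflexivity].
  - left. simpl. replace (D * 0 * 0)%Z with 0%Z by ring. simpl. lra.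
  - lra.
  - lra.
Qed.

Lemma unit_inv D a b : isUnitOD D a b ->
  isUnitOD D (-a) b /\ qval D (-a) b = - qconj D a b /\ qconj D (-a) b = - qval D a b.
Proof.
  intros [H N]. unfold qval, qconj. rewrite opp_IZR. split; [|split; lra].
  split.
  - unfold inOD in *. destruct (Z.eqb (D mod 4) 1).
    + apply even_ex in H. destruct H as [k Hk]. apply even_ex. exists (-k - b)%Z. lia.
    + destruct H as [H1 H2]. split; [|exact H2]. apply even_ex in H1. destruct H1 as [k Hk].
      apply even_ex. exists (-k)%Z. lia.
  - unfold qnorm in *. replace (- a * - a - D * b * b)%Z with (a * a - D * b * b)%Z by ring. exact N.
Qed.

Definition sgn (m : nat) : Z := if Nat.even m then 1%Z else (-1)%Z.

Lemma pow_m1 m : (-1) ^ m = IZR (sgn m).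
Proof.
  induction m as [|m IH]. reflexivity.
  simpl pow. rewrite IH. unfold sgn. rewrite Nat.even_succ, <- Nat.negb_even.
  destruct (Nat.even m); simpl; lra.
Qed.

Section U.
End U.

Lemma fund_gt1 D a b : isFundUnit D a b -> 1 < qval D a b.
Proof. intros [_ [H _]]. exact H. Qed.

Lemma conj_eq D a b : (0 <= D)%Z -> qnorm D a b = -1 -> qconj D a b = - / qval D a b.
Proof.
  intros HD Hn. rewrite <- (qval_qconj D a b HD) in Hn.
  assert (qval D a b <> 0) by (intro E; rewrite E in Hn; lra).
  field_simplify_eq; [|assumption]. lra.
Qed.

Lemma pow_unit D a b : (0 <= D)%Z -> isUnitOD D a b -> forall m,
  exists c d, isUnitOD D c d /\ qval D c d = qval D a b ^ m /\ qconj D c d = qconj D a b ^ m.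
Proof.
  intros HD Hu m. induction m as [|m IH].
  - exists 2%Z, 0%Z. exact (unit_one D).
  - destruct IH as (c & d & Hcd & E1 & E2).
    destruct (unit_mul D c d a b HD Hcd Hu) as (X & Y & H & F1 & F2).
    exists X, Y. split; [exact H|]. simpl. rewrite F1, F2, E1, E2. split; ring.
Qed.

Lemma sqfree_not4 D d : squarefree D -> (d * d * D = 4)%Z -> (1 < D)%Z -> False.
Proof.
  intros Hsq E HD.
  assert (Hd : (-2 < d < 2)%Z) by nia.
  assert (HD4 : D = 4%Z).
  { assert (d = -1 \/ d = 0 \/ d = 1)%Z as [ -> | [ -> | -> ] ] by lia; lia. }
  subst D.
  destruct (Hsq 2%Z) as [H|H]; [exists 1%Z; reflexivity| discriminate | discriminate].
Qed.

Lemma descent D a b : (1 < D)%Z -> squarefree D -> isFundUnit D a b -> qnorm D a b = -1 ->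
  forall N c d, isUnitOD D c d -> 1 <= qval D c d < qval D a b ^ N ->
  exists m, qval D c d = qval D a b ^ m /\ qconj D c d = qconj D a b ^ m.
Proof.
  intros HD1 Hsq Hfu Hn. assert (HD : (0 <= D)%Z) by lia.
  pose proof (fund_gt1 D a b Hfu) as He.
  pose proof (conj_eq D a b HD Hn) as Hc.
  induction N as [|N IH]; intros c d Hu [H1 H2].
  - simpl in H2. lra.
  - destruct (Rlt_or_le (qval D c d) (qval D a b)) as [Hlt|Hge].
    + assert (Hv : qval D c d = 1).
      { destruct H1 as [H1|H1]; [|auto].
        destruct Hfu as [_ [_ Hmin]]. specialize (Hmin c d Hu H1). lra. }
      pose proof (qval_qconj D c d HD) as Q.
      destruct Hu as [Hi Hnm]. rewrite Hv in Q.
      destruct Hnm as [Hnm|Hnm]; rewrite Hnm in Q.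
      * exists 0%nat. simpl. lra.
      * exfalso. unfold qval in Hv. unfold qconj in Q.
        pose proof (sqrt_sq_D D HD) as Hs.
        assert (IZR c = 0) by lra. apply eq_IZR in H. subst c.
        assert (IZR d * sqrt (IZR D) = 2) by lra.
        apply (sqfree_not4 D d Hsq); [|exact HD1].
        apply eq_IZR. rewrite !mult_IZR. rewrite <- Hs.
        replace (IZR d * IZR d * (sqrt (IZR D) * sqrt (IZR D))) with
          ((IZR d * sqrt (IZR D)) * (IZR d * sqrt (IZR D))) by ring.
        rewrite H. reflexivity.
    + destruct Hfu as [Hau Hrest].
      destruct (unit_inv D a b Hau) as (Hiu & I1 & I2).
      destruct (unit_mul D c d (-a) b HD Hu Hiu) as (X & Y & HXY & F1 & F2).
      rewrite I1, Hc in F1. rewrite I2 in F2.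
      assert (1 <= qval D X Y < qval D a b ^ N).
      { rewrite F1. simpl in H2. split.
        - apply (Rmult_le_reg_r (qval D a b)); [lra|].
          replace (qval D c d * - - / qval D a b * qval D a b) with (qval D c d) by (field; lra). lra.
        - apply (Rmult_lt_reg_r (qval D a b)); [lra|].
          replace (qval D c d * - - / qval D a b * qval D a b) with (qval D c d) by (field; lra). lra. }
      destruct (IH X Y HXY H) as (m & M1 & M2).
      exists (S m). simpl. rewrite <- M1, <- M2, F1, F2, Hc.
      split; field; lra.
Qed.

Lemma classify D a b : (1 < D)%Z -> squarefree D -> isFundUnit D a b -> qnorm D a b = -1 ->
  forall c d, isUnitOD D c d -> 1 <= qval D c d ->
  exists m, qval D c d = qval D a b ^ m /\ qconj D c d = qconj D a b ^ m.
Proof.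
  intros HD1 Hsq Hfu Hn c d Hu H1.
  pose proof (fund_gt1 D a b Hfu) as He.
  destruct (Pow_x_infinity (qval D a b) ltac:(rewrite Rabs_pos_eq; lra) (qval D c d + 1)) as [N HN].
  specialize (HN N (le_n N)). rewrite Rabs_pos_eq in HN by (apply pow_le; lra).
  apply (descent D a b HD1 Hsq Hfu Hn N c d Hu). lra.
Qed.

Lemma sqrt_qD D : (0 <= D)%Z ->
  sqrt (qD D) = if Z.eqb (D mod 4) 1 then sqrt (IZR D) else 2 * sqrt (IZR D).
Proof.
  intro HD. unfold qD. destruct (Z.eqb (D mod 4) 1); [reflexivity|].
  rewrite sqrt_mult by (try lra; apply IZR_le; exact HD).
  replace 4 with (2*2) by ring. rewrite sqrt_square by lra. reflexivity.
Qed.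

Lemma FD_unit D a b c d m : (1 < D)%Z ->
  qval D c d = qval D a b ^ m -> qconj D c d = qconj D a b ^ m ->
  FD D a b m = IZR d * sqrt (IZR D) / sqrt (qD D).
Proof.
  intros HD E1 E2. unfold FD. rewrite <- E1, <- E2. unfold qval, qconj. f_equal. field.
Qed.

Lemma sqrtD_pos D : (1 < D)%Z -> 0 < sqrt (IZR D).
Proof. intro. apply sqrt_lt_R0. apply IZR_lt. lia. Qed.

Lemma lemA D a b : (1 < D)%Z -> isFundUnit D a b -> qnorm D a b = -1 ->
  forall m, exists x y, FD D a b m = IZR y /\ (x*x - D*y*y = sgn m * ellD D)%Z.
Proof.
  intros HD1 Hfu Hn m. assert (HD : (0 <= D)%Z) by lia.
  destruct Hfu as [Hau _].
  destruct (pow_unit D a b HD Hau m) as (c & d & [Hi _] & E1 & E2).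
  pose proof (FD_unit D a b c d m HD1 E1 E2) as HF.
  assert (Hq : qnorm D c d = IZR (sgn m)).
  { rewrite <- (qval_qconj D c d HD), E1, E2, <- Rpow_mult_distr, (qval_qconj D a b HD), Hn.
    apply pow_m1. }
  unfold qnorm in Hq.
  assert (Hq' : (c*c - D*d*d = 4 * sgn m)%Z).
  { apply eq_IZR. rewrite mult_IZR. lra. }
  pose proof (sqrtD_pos D HD1) as Hs.
  rewrite sqrt_qD in HF by exact HD.
  unfold inOD, ellD in *. destruct (Z.eqb (D mod 4) 1).
  - exists c, d. split; [rewrite HF; field; lra| lia].
  - destruct Hi as [Hc Hd]. apply even_ex in Hc, Hd. destruct Hc as [c' ->]. destruct Hd as [d' ->].
    exists c', d'. split; [rewrite HF, mult_IZR; field; lra| nia].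
Qed.

Lemma lemB D a b : (1 < D)%Z -> squarefree D -> isFundUnit D a b -> qnorm D a b = -1 ->
  forall x y nu, (0 < y)%Z -> (nu = 1 \/ nu = -1)%Z -> (x*x - D*y*y = nu * ellD D)%Z ->
  exists m, (1 <= m)%nat /\ FD D a b m = IZR y /\ sgn m = nu.
Proof.
  intros HD1 Hsq Hfu Hn x0 y nu Hy Hnu Hxy. assert (HD : (0 <= D)%Z) by lia.
  set (x := Z.abs x0).
  assert (Hx : (0 <= x)%Z) by lia.
  assert (Hxy' : (x*x - D*y*y = nu * ellD D)%Z).
  { unfold x. rewrite <- Hxy. destruct (Z.abs_spec x0) as [[_ ->]|[_ ->]]; ring. }
  clearbody x. clear Hxy x0.
  assert (Hx0 : (0 < x)%Z).
  { destruct (Z.eq_dec x 0) as [E|E]; [|lia]. subst x. exfalso.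
    unfold ellD in Hxy'. destruct (Z.eqb (D mod 4) 1).
    - destruct Hnu as [-> | ->]; [nia|]. apply (sqfree_not4 D y Hsq); [lia|exact HD1].
    - destruct Hnu as [-> | ->]; nia. }
  pose proof (sqrtD_pos D HD1) as Hs.
  assert (Hunit : exists c d, inOD D c d /\ qnorm D c d = IZR nu /\ (0 < c)%Z /\ (0 < d)%Z /\
      IZR d * sqrt (IZR D) / sqrt (qD D) = IZR y).
  { rewrite sqrt_qD by exact HD. unfold inOD, qnorm, ellD in *.
    destruct (Z.eqb (D mod 4) 1) eqn:E.
    - apply Z.eqb_eq in E.
      assert (HD4 : D = (4 * (D / 4) + D mod 4)%Z) by (apply Z.div_mod; lia).
      rewrite E in HD4. set (w := (D / 4)%Z) in *. clearbody w.
      exists x, y. split; [|split;[|split;[lia|split;[lia|field;lra]]]].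
      + apply even_ex. destruct (Z.Even_or_Odd (x - y)) as [[k Hk]|[k Hk]].
        * exists k. exact Hk.
        * exfalso. assert (x = y + 2*k + 1)%Z by lia. subst x D.
          assert (2*(2*k*y + y + 2*k*k + 2*k - 2*w*y*y) + 1 = 4*nu)%Z by nia. lia.
      + rewrite Hxy'. rewrite mult_IZR. simpl. lra.
    - exists (2*x)%Z, (2*y)%Z. split; [|split;[|split;[lia|split;[lia|rewrite mult_IZR; field;lra]]]].
      + split; apply even_ex; eexists; reflexivity.
      + replace (2 * x * (2 * x) - D * (2 * y) * (2 * y))%Z with (4 * (x*x - D*y*y))%Z by ring.
        rewrite mult_IZR, Hxy', mult_IZR. simpl. lra. }
  destruct Hunit as (c & d & Hi & Hqn & Hc & Hd & HF).
  assert (Hu : isUnitOD D c d).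
  { split; [exact Hi|]. rewrite Hqn. destruct Hnu as [-> | ->]; [left|right]; reflexivity. }
  assert (Hgt : 1 < qval D c d).
  { pose proof (qval_qconj D c d HD) as Q.
    assert (Hqq : qval D c d > Rabs (qconj D c d)).
    { unfold qval, qconj. assert (0 < IZR c) by (apply IZR_lt; lia). assert (0 < IZR d) by (apply IZR_lt; lia).
      assert (0 < IZR d * sqrt (IZR D)) by (apply Rmult_lt_0_compat; lra).
      unfold Rgt; apply Rabs_def1; lra. }
    destruct Hu as [_ Hnm].
    assert (Rabs (qval D c d * qconj D c d) = 1) by (rewrite Q; destruct Hnm as [-> | ->]; rewrite ?Rabs_R1, ?Rabs_m1; reflexivity).
    rewrite Rabs_mult in H. rewrite (Rabs_pos_eq (qval D c d)) in H by (pose proof (Rabs_pos (qconj D c d)); lra).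
    pose proof (Rabs_pos (qconj D c d)).
    assert (qval D c d * qval D c d > qval D c d * Rabs (qconj D c d)) by (apply Rmult_gt_compat_l; lra).
    nra. }
  destruct (classify D a b HD1 Hsq Hfu Hn c d Hu ltac:(lra)) as (m & E1 & E2).
  exists m. split; [|split].
  - destruct m; [simpl in E1; lra| lia].
  - rewrite (FD_unit D a b c d m HD1 E1 E2). exact HF.
  - assert (Hq : qnorm D c d = IZR (sgn m)).
    { rewrite <- (qval_qconj D c d HD), E1, E2, <- Rpow_mult_distr, (qval_qconj D a b HD), Hn.
      apply pow_m1. }
    apply eq_IZR. rewrite <- Hq. exact Hqn.
Qed.

Lemma pow_le1 x n : 0 <= x <= 1 -> 0 <= x ^ n <= 1.
Proof. intro H. induction n; simpl; [lra|]. nra. Qed.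

Lemma pow_ge1 x n : 1 <= x -> 1 <= x ^ n.
Proof. intro H. induction n; simpl; [lra|]. nra. Qed.

Lemma pow_ge_x x n : 1 <= x -> (1 <= n)%nat -> x <= x ^ n.
Proof. intros H Hn. destruct n; [lia|]. simpl. pose proof (pow_ge1 x n H). nra. Qed.

Lemma qD_pos D : (1 < D)%Z -> 0 < sqrt (qD D).
Proof.
  intro. apply sqrt_lt_R0. unfold qD. assert (0 < IZR D) by (apply IZR_lt; lia).
  destruct (Z.eqb (D mod 4) 1); lra.
Qed.

Lemma abs_conj_pow D a b m : (1 < D)%Z -> isFundUnit D a b -> qnorm D a b = -1 ->
  Rabs (qconj D a b ^ m) <= 1.
Proof.
  intros HD Hfu Hn. pose proof (fund_gt1 D a b Hfu).
  rewrite (conj_eq D a b ltac:(lia) Hn), <- RPow_abs.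
  rewrite Rabs_Ropp, Rabs_pos_eq by (apply Rlt_le, Rinv_0_lt_compat; lra).
  apply pow_le1. split; [apply Rlt_le, Rinv_0_lt_compat; lra|].
  rewrite <- Rinv_1. apply Rinv_le_contravar; lra.
Qed.

Lemma F_pos D a b m : (1 < D)%Z -> isFundUnit D a b -> qnorm D a b = -1 ->
  (1 <= m)%nat -> 0 < FD D a b m.
Proof.
  intros HD Hfu Hn Hm. pose proof (fund_gt1 D a b Hfu).
  pose proof (abs_conj_pow D a b m HD Hfu Hn). pose proof (pow_ge_x (qval D a b) m ltac:(lra) Hm).
  pose proof (Rle_abs (qconj D a b ^ m)).
  unfold FD. apply Rdiv_lt_0_compat; [lra|apply qD_pos; exact HD].
Qed.

Lemma F_ge1 D a b m : (1 < D)%Z -> isFundUnit D a b -> qnorm D a b = -1 ->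
  (1 <= m)%nat -> 1 <= FD D a b m.
Proof.
  intros HD Hfu Hn Hm. pose proof (F_pos D a b m HD Hfu Hn Hm) as P.
  destruct (lemA D a b HD Hfu Hn m) as (x & y & E & _). rewrite E in *.
  apply lt_IZR in P. apply IZR_le. lia.
Qed.

Lemma F_bound D a b m : (1 < D)%Z -> isFundUnit D a b -> qnorm D a b = -1 ->
  (1 <= m)%nat -> qval D a b ^ m / (1 + sqrt (qD D)) <= FD D a b m.
Proof.
  intros HD Hfu Hn Hm. pose proof (F_ge1 D a b m HD Hfu Hn Hm) as P.
  pose proof (abs_conj_pow D a b m HD Hfu Hn). pose proof (Rle_abs (qconj D a b ^ m)).
  pose proof (qD_pos D HD) as Hr.
  assert (FD D a b m * sqrt (qD D) = qval D a b ^ m - qconj D a b ^ m) by (unfold FD; field; lra).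
  assert (Hk : qval D a b ^ m <= FD D a b m * (1 + sqrt (qD D))).
  { rewrite Rmult_plus_distr_l, Rmult_1_r. set (p := qval D a b ^ m) in *. set (t := qconj D a b ^ m) in *. lra. }
  unfold Rdiv. replace (FD D a b m) with (FD D a b m * (1 + sqrt (qD D)) * / (1 + sqrt (qD D))) by (field; lra).
  apply Rmult_le_compat_r; [apply Rlt_le, Rinv_0_lt_compat; lra| exact Hk].
Qed.

Lemma F_mono D a b m : (1 < D)%Z -> isFundUnit D a b -> qnorm D a b = -1 ->
  FD D a b m < FD D a b (m + 2).
Proof.
  intros HD Hfu Hn. pose proof (fund_gt1 D a b Hfu) as He.
  pose proof (abs_conj_pow D a b m HD Hfu Hn) as Ha.
  pose proof (qD_pos D HD) as Hr.
  pose proof (pow_ge1 (qval D a b) m ltac:(lra)) as Hp.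
  pose proof (conj_eq D a b ltac:(lia) Hn) as Hc.
  unfold FD. apply Rmult_lt_compat_r; [apply Rinv_0_lt_compat; exact Hr|].
  rewrite !pow_add. simpl. rewrite Rmult_1_r.
  set (e := qval D a b) in *. set (t := qconj D a b ^ m) in *.
  rewrite Hc. set (u := / e).
  assert (Heu : e * u = 1) by (unfold u; field; lra).
  assert (0 < u < 1) by (unfold u; split; [apply Rinv_0_lt_compat; lra|rewrite <- Rinv_1; apply Rinv_lt_contravar; lra]).
  assert (t * (- u * - u) - t <= 1 - u*u).
  { apply Rabs_le_between in Ha. assert (0 <= (1 + t) * (1 - u*u)) by (apply Rmult_le_pos; nra). lra. }
  assert (e ^ m * (e * e) - e ^ m >= e * e - 1).
  { assert (0 <= (e^m - 1) * (e * e - 1)) by (apply Rmult_le_pos; nra). lra. }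
  assert (e * e - 1 > 1 - u * u).
  { assert (0 < (e - u) * (e - u)) by (apply Rmult_lt_0_compat; lra). lra. }
  lra.
Qed.

Fixpoint psum (f : nat -> C) (n : nat) : C :=
  match n with O => zero | S n => plus (psum f n) (f n) end.

Lemma psum_sum f n : psum f (S n) = sum_n f n.
Proof.
  induction n as [|n IH].
  - simpl. rewrite sum_O. apply plus_zero_l.
  - change (psum f (S (S n))) with (plus (psum f (S n)) (f (S n))). rewrite IH, sum_Sn. reflexivity.
Qed.

Lemma phi_mono (phi : nat -> nat) : (forall k, (phi k < phi (S k))%nat) ->
  forall k k', (k < k')%nat -> (phi k < phi k')%nat.
Proof.
  intros H k k' Hk. induction Hk as [|k' Hk IH].
  - apply H.
  - specialize (H k'). lia.
Qed.

Lemma reindex (a b : nat -> C) (phi : nat -> nat) (L : C) :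
  (forall k, (phi k < phi (S k))%nat) ->
  (forall k, b (phi k) = a k) ->
  (forall j, (forall k, phi k <> j) -> b j = zero) ->
  is_series a L -> is_series b L.
Proof.
  intros Hphi Hab Hb0 Ha.
  pose proof (phi_mono phi Hphi) as Hm.
  assert (Hinj : forall k k', phi k = phi k' -> k = k').
  { intros k k' E. destruct (Nat.lt_trichotomy k k') as [H|[H|H]]; auto;
    apply Hm in H; lia. }
  assert (HK : forall N, {K : nat | (forall k, (phi k < N)%nat <-> (k < K)%nat) /\ psum b N = psum a K}).
  { induction N as [|N [K [HK1 HK2]]].
    - exists 0%nat. split; [intro k; lia| reflexivity].
    - destruct (Nat.eq_dec (phi K) N) as [E|E].
      + exists (S K). split.
        * intro k. split; intro H.
          -- destruct (Nat.eq_dec (phi k) N) as [E'|E'].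
             ++ rewrite <- E in E'. apply Hinj in E'. lia.
             ++ assert (phi k < N)%nat by lia. apply HK1 in H0. lia.
          -- destruct (Nat.eq_dec k K) as [->|E']; [lia|].
             assert (k < K)%nat by lia. apply HK1 in H0. lia.
        * simpl. rewrite HK2, <- E, Hab. reflexivity.
      + assert (HgeK : (N <= phi K)%nat).
        { destruct (Nat.le_gt_cases N (phi K)) as [H|H]; auto. apply HK1 in H. lia. }
        assert (Hnot : forall k, phi k <> N).
        { intros k Ek. destruct (Nat.lt_trichotomy k K) as [H|[H|H]].
          - apply HK1 in H. lia.
          - subst. contradiction.
          - apply Hm in H. lia. }
        exists K. split.
        * intro k. rewrite <- HK1. specialize (Hnot k). lia.
        * simpl. rewrite HK2, (Hb0 N Hnot). apply plus_zero_r. }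
  set (Kf := fun N => proj1_sig (HK N)).
  assert (HKf : forall N, psum b N = psum a (Kf N)) by (intro N; exact (proj2 (proj2_sig (HK N)))).
  assert (HKf1 : forall N k, (phi k < N)%nat -> (k < Kf N)%nat)
    by (intros N k; exact (proj1 (proj1 (proj2_sig (HK N)) k))).
  unfold is_series in *.
  apply filterlim_ext with (fun N => psum a (Kf (S N))).
  { intro N. rewrite <- HKf, psum_sum. reflexivity. }
  intros P HP. specialize (Ha P HP). destruct Ha as [N0 HN0].
  exists (phi (S N0)). intros n Hn.
  assert (HS : (S N0 < Kf (S n))%nat) by (apply HKf1; lia).
  destruct (Kf (S n)) as [|K'] eqn:EK; [lia|].
  rewrite psum_sum. apply HN0. lia.
Qed.

Lemma filter_nil {A} (f : A -> bool) l : (forall x, f x = false) -> filter f l = nil.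
Proof. intro H. induction l; simpl; [reflexivity|]. rewrite H. exact IHl. Qed.

Lemma r1_zero n : (forall x, (x * x <> n)%Z) -> r1 n = 0.
Proof.
  intro H. unfold r1. rewrite filter_nil; [reflexivity|].
  intro x. apply Z.eqb_neq. apply H.
Qed.

Lemma r1_nz n : r1 n <> 0 -> exists x, (0 <= x /\ x * x = n)%Z.
Proof.
  intro H. destruct (classic (exists x, (0 <= x /\ x * x = n)%Z)) as [E|E]; [exact E|].
  exfalso. apply H. apply r1_zero. intros x Ex. apply E. exists (Z.abs x). split; [lia|].
  rewrite <- Ex. destruct (Z.abs_spec x) as [[_ ->]|[_ ->]]; ring.
Qed.

Lemma r1_two y : y <> 0%Z -> r1 (y * y) = 2.
Proof.
  intro Hy. unfold r1.
  set (n := (y * y)%Z).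
  set (l := map (fun k => (Z.of_nat k - Z.abs n)%Z) (seq 0 (Z.to_nat (2 * Z.abs n + 1)))).
  set (f := fun x => Z.eqb (x * x) n).
  assert (Hl : forall x, In x l <-> (- Z.abs n <= x <= Z.abs n)%Z).
  { intro x. unfold l. rewrite in_map_iff. split.
    - intros [k [Ek Hk]]. apply in_seq in Hk. lia.
    - intro Hx. exists (Z.to_nat (x + Z.abs n)). split; [lia|]. apply in_seq. lia. }
  assert (Hnd : NoDup l).
  { unfold l. apply NoDup_map_NoDup_ForallPairs; [|apply seq_NoDup].
    intros u v _ _ E. lia. }
  assert (Hf : forall x, In x (filter f l) <-> x = y \/ x = (- y)%Z).
  { intro x. rewrite filter_In, Hl. unfold f. rewrite Z.eqb_eq. unfold n. split.
    - intros [_ E]. assert ((x - y) * (x + y) = 0)%Z by nia.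
      apply Z.mul_eq_0 in H. lia.
    - intros [-> | ->]; split; try nia. }
  assert (length (filter f l) = 2%nat).
  { apply Nat.le_antisymm.
    - change 2%nat with (length (y :: (- y)%Z :: nil)).
      apply NoDup_incl_length; [apply NoDup_filter; exact Hnd|].
      intros x Hx. apply Hf in Hx. destruct Hx as [-> | ->]; simpl; auto.
    - change 2%nat with (length (y :: (- y)%Z :: nil)).
      apply NoDup_incl_length.
      + constructor; [simpl; intros [E|[]]; lia| constructor; [simpl; tauto| constructor]].
      + intros x Hx. apply Hf. simpl in Hx. destruct Hx as [<- | [<- | []]]; auto. }
  change (INR (length (filter f l)) = 2). rewrite H. simpl. lra.
Qed.

Lemma exp_le x y : x <= y -> exp x <= exp y.
Proof. intros [H|H]; [apply Rlt_le, exp_increasing, H| rewrite H; lra]. Qed.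

Lemma ln_le' x y : 0 < x -> x <= y -> ln x <= ln y.
Proof. intros Hx [H|H]; [apply Rlt_le, ln_increasing; assumption| rewrite H; lra]. Qed.

Lemma exp_mul_pow x n : exp (INR n * x) = exp x ^ n.
Proof.
  induction n as [|n IH]; [simpl; rewrite Rmult_0_l; apply exp_0|].
  rewrite S_INR, Rmult_plus_distr_r, Rmult_1_l, exp_plus, IH. simpl. ring.
Qed.

Lemma cpow_norm x s : Cmod (cpow_neg x s) = exp (- Re s * ln x).
Proof.
  unfold cpow_neg, Cmod. simpl.
  set (E := exp (- Re s * ln x)). set (t := - Im s * ln x).
  replace (E * cos t * (E * cos t * 1) + E * sin t * (E * sin t * 1)) with
    (E * E * (Rsqr (sin t) + Rsqr (cos t))) by (unfold Rsqr; ring).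
  rewrite sin2_cos2, Rmult_1_r. apply sqrt_square. unfold E. pose proof (exp_pos (- Re s * ln x)). lra.
Qed.

Lemma cpow_sq y s : 0 < y -> cpow_neg (y * y) (Cmult s (RtoC (/ 2))) = cpow_neg y s.
Proof.
  intro Hy. unfold cpow_neg. rewrite ln_mult by assumption.
  destruct s as [sr si]. unfold Cmult, RtoC, Re, Im. simpl.
  f_equal; f_equal; f_equal; field.
Qed.

Lemma series_conv D a b s p : (1 < D)%Z -> isFundUnit D a b -> qnorm D a b = -1 -> 0 < Re s ->
  (1 <= p)%nat ->
  exists L, is_series (fun k => cpow_neg (FD D a b (2 * k + p)) s) L.
Proof.
  intros HD Hfu Hn Hs Hp.
  pose proof (fund_gt1 D a b Hfu) as He.
  set (e := qval D a b) in *.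
  set (r := sqrt (qD D)). assert (Hr : 0 < r) by apply (qD_pos D HD).
  set (sg := Re s).
  assert (Hle : 0 < ln e) by (rewrite <- ln_1; apply ln_increasing; lra).
  set (rho := exp (- sg * ln e)).
  assert (Hrho : 0 < rho < 1).
  { split; [apply exp_pos|]. rewrite <- exp_0. apply exp_increasing.
    assert (0 < sg * ln e) by (apply Rmult_lt_0_compat; assumption). lra. }
  set (C0 := exp (sg * ln (1 + r))).
  assert (Hb : forall k, Cmod (cpow_neg (FD D a b (2 * k + p)) s) <= C0 * (rho ^ 2) ^ k).
  { intro k. rewrite cpow_norm. fold sg.
    set (m := (2 * k + p)%nat).
    assert (Hm : (1 <= m)%nat) by (unfold m; lia).
    pose proof (F_bound D a b m HD Hfu Hn Hm) as Fb. fold e r in Fb.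
    assert (Hpos : 0 < e ^ m / (1 + r)) by (apply Rdiv_lt_0_compat; [apply pow_lt; lra| lra]).
    apply Rle_trans with (exp (- sg * ln (e ^ m / (1 + r)))).
    - apply exp_le. apply Ropp_le_cancel. rewrite !Ropp_mult_distr_l_reverse, !Ropp_involutive.
      apply Rmult_le_compat_l; [apply Rlt_le; exact Hs|]. apply ln_le'; assumption.
    - unfold Rdiv. rewrite ln_mult, ln_Rinv, ln_pow by (try apply pow_lt; try apply Rinv_0_lt_compat; lra).
      replace (- sg * (INR m * ln e + - ln (1 + r))) with (sg * ln (1 + r) + INR m * (- sg * ln e)) by ring.
      rewrite exp_plus, exp_mul_pow. fold C0 rho.
      apply Rmult_le_compat_l; [unfold C0; apply Rlt_le, exp_pos|].
      rewrite <- pow_mult. unfold m. rewrite pow_add.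
      pose proof (pow_le1 rho p ltac:(lra)).
      assert (0 <= rho ^ (2 * k)) by (apply pow_le; lra).
      rewrite <- (Rmult_1_r (rho ^ (2 * k))) at 2. apply Rmult_le_compat_l; [exact H0| apply H]. }
  assert (Hex : ex_series (fun k => C0 * (rho ^ 2) ^ k)).
  { apply (ex_series_ext (fun k => scal C0 ((rho ^ 2) ^ k))); [intro; reflexivity|].
    apply (@ex_series_scal R_AbsRing R_NormedModule). exists (/ (1 - rho ^ 2)). apply is_series_geom.
    rewrite Rabs_pos_eq by (apply pow_le; lra). simpl. nra. }
  destruct (@ex_series_le C_AbsRing C_CompleteNormedModule (fun k => cpow_neg (FD D a b (2 * k + p)) s) _ ltac:(intro k; exact (Hb k)) Hex) as [L HL]. exists L. exact HL.
Qed.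

Lemma x_nonzero D y x nu : (1 < D)%Z -> squarefree D -> (0 < y)%Z -> (nu = 1 \/ nu = -1)%Z ->
  (x * x - D * y * y = nu * ellD D)%Z -> x <> 0%Z.
Proof.
  intros HD1 Hsq Hy Hnu E Ex. subst x. unfold ellD in E. destruct (Z.eqb (D mod 4) 1).
  - destruct Hnu as [-> | ->]; [nia|]. apply (sqfree_not4 D y Hsq); [lia|exact HD1].
  - destruct Hnu as [-> | ->]; nia.
Qed.

Lemma main_generic D a b s p nu : (1 < D)%Z -> squarefree D -> isFundUnit D a b ->
  qnorm D a b = -1 -> 0 < Re s -> (1 <= p)%nat -> (nu = 1 \/ nu = -1)%Z ->
  (forall k, sgn (2 * k + p) = nu) ->
  (forall m, (1 <= m)%nat -> sgn m = nu -> exists k, m = (2 * k + p)%nat) ->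
  exists L, is_series (fun k => cpow_neg (FD D a b (2 * k + p)) s) L /\
    is_series (fun k => Cmult (RtoC (/ 4 * r1 (Z.of_nat (S k)) * r1 (D * Z.of_nat (S k) + nu * ellD D)))
                 (cpow_neg (INR (S k)) (Cmult s (RtoC (/ 2))))) L.
Proof.
  intros HD1 Hsq Hfu Hn Hs Hp Hnu Hsg Hsg'.
  destruct (series_conv D a b s p HD1 Hfu Hn Hs Hp) as [L HL].
  exists L. split; [exact HL|].
  assert (Hy : forall k, {y : Z | FD D a b (2 * k + p) = IZR y /\
                          exists x, (x * x - D * y * y = nu * ellD D)%Z}).
  { intro k. apply constructive_indefinite_description.
    destruct (lemA D a b HD1 Hfu Hn (2 * k + p)) as (x & y & E1 & E2).
    exists y. split; [exact E1|]. exists x. rewrite E2, Hsg. reflexivity. }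
  set (yk := fun k => proj1_sig (Hy k)).
  assert (HyF : forall k, FD D a b (2 * k + p) = IZR (yk k)) by (intro k; exact (proj1 (proj2_sig (Hy k)))).
  assert (Hyx : forall k, exists x, (x * x - D * yk k * yk k = nu * ellD D)%Z)
    by (intro k; exact (proj2 (proj2_sig (Hy k)))).
  assert (Hypos : forall k, (0 < yk k)%Z).
  { intro k. apply lt_IZR. rewrite <- HyF. apply (F_pos D a b _ HD1 Hfu Hn). lia. }
  set (phi := fun k => (Z.to_nat (yk k * yk k) - 1)%nat).
  assert (HphiS : forall k, Z.of_nat (S (phi k)) = (yk k * yk k)%Z).
  { intro k. specialize (Hypos k). unfold phi.
    replace (S (Z.to_nat (yk k * yk k) - 1)) with (Z.to_nat (yk k * yk k)) by lia.
    apply Z2Nat.id. nia. }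
  apply (reindex (fun k => cpow_neg (FD D a b (2 * k + p)) s) _ phi L); [ | | | exact HL].
  - intro k. assert (Hlt : (yk k < yk (S k))%Z).
    { apply lt_IZR. rewrite <- !HyF. replace (2 * S k + p)%nat with (2 * k + p + 2)%nat by lia.
      apply F_mono; assumption. }
    pose proof (HphiS k). pose proof (HphiS (S k)). pose proof (Hypos k). nia.
  - intro k. rewrite HphiS. destruct (Hyx k) as [x Hx].
    replace (D * (yk k * yk k) + nu * ellD D)%Z with (x * x)%Z by lia.
    rewrite !r1_two; [| exact (x_nonzero D (yk k) x nu HD1 Hsq (Hypos k) Hnu Hx) | specialize (Hypos k); lia].
    replace (/ 4 * 2 * 2) with 1 by field. rewrite Cmult_1_l.
    rewrite INR_IZR_INZ, HphiS, mult_IZR, cpow_sq, <- HyF; [reflexivity|].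
    apply IZR_lt. apply Hypos.
  - intros j Hj.
    destruct (classic (r1 (Z.of_nat (S j)) <> 0 /\ r1 (D * Z.of_nat (S j) + nu * ellD D) <> 0)) as [[H1 H2]|H].
    + exfalso. apply r1_nz in H1. apply r1_nz in H2.
      destruct H1 as [y [Hy0 Ey]]. destruct H2 as [x [_ Ex]].
      assert (Hypos' : (0 < y)%Z) by (destruct (Z.eq_dec y 0); [subst; lia| lia]).
      destruct (lemB D a b HD1 Hsq Hfu Hn x y nu Hypos' Hnu ltac:(rewrite Ex, <- Z.mul_assoc, Ey; ring)) as (m & Hm1 & Fm & Sm).
      destruct (Hsg' m Hm1 Sm) as [k ->].
      rewrite HyF in Fm. apply eq_IZR in Fm.
      apply (Hj k). apply Nat.succ_inj. apply Nat2Z.inj. rewrite HphiS, Fm. exact Ey.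
    + assert (r1 (Z.of_nat (S j)) = 0 \/ r1 (D * Z.of_nat (S j) + nu * ellD D) = 0) as [E|E]
        by (apply not_and_or in H; destruct H as [H|H]; apply NNPP in H; auto).
      * rewrite E, Rmult_0_r, Rmult_0_l, Cmult_0_l. reflexivity.
      * rewrite E, Rmult_0_r, Cmult_0_l. reflexivity.
Qed.

Lemma sgn_shift k p : sgn (2 * k + p) = sgn p.
Proof. unfold sgn. rewrite Nat.add_comm, Nat.even_add_mul_2. reflexivity. Qed.

Theorem mainTheorem10 (D a b : Z) (s : C) :
  (1 < D)%Z -> squarefree D ->
  isFundUnit D a b -> qnorm D a b = -1 ->
  0 < Re s ->
  (exists L : C, is_series (Zodd_term D a b s) L /\ is_series (dir_odd_term D s) L) /\
  (exists L : C, is_series (Zeven_term D a b s) L /\ is_series (dir_even_term D s) L).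
Proof.
  intros HD1 Hsq Hfu Hn Hs. split.
  - destruct (main_generic D a b s 1 (-1) HD1 Hsq Hfu Hn Hs ltac:(lia) ltac:(lia)) as [L [H1 H2]].
    + intro k. rewrite sgn_shift. reflexivity.
    + intros m Hm Sm. destruct (Nat.Even_or_Odd m) as [[k Hk]|[k Hk]].
      * exfalso. subst m. rewrite <- (Nat.add_0_r (2 * k)) in Sm. rewrite (sgn_shift k 0) in Sm. discriminate.
      * exists k. exact Hk.
    + exists L. split; [exact H1|].
      eapply is_series_ext; [|exact H2]. intro k. unfold dir_odd_term.
      replace (D * Z.of_nat (S k) + -1 * ellD D)%Z with (D * Z.of_nat (S k) - ellD D)%Z by ring.
      reflexivity.
  - destruct (main_generic D a b s 2 1 HD1 Hsq Hfu Hn Hs ltac:(lia) ltac:(lia)) as [L [H1 H2]].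
    + intro k. rewrite sgn_shift. reflexivity.
    + intros m Hm Sm. destruct (Nat.Even_or_Odd m) as [[k Hk]|[k Hk]].
      * exists (k - 1)%nat. lia.
      * exfalso. subst m. rewrite (sgn_shift k 1) in Sm. discriminate.
    + exists L. split.
      * eapply is_series_ext; [|exact H1]. intro k. reflexivity.
      * eapply is_series_ext; [|exact H2]. intro k. unfold dir_even_term.
        replace (D * Z.of_nat (S k) + 1 * ellD D)%Z with (D * Z.of_nat (S k) + ellD D)%Z by ring.
        reflexivity.
Qed.
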